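(* Let $p$ be a prime with $p \equiv 7 \pmod{12}$. For each primitive $6$th root of unity $u \in \mathbb{Z}_p$, there is a simple $\mathbb{Z}_p$-invariant rank $3$ matroid structure on $\mathbb{Z}_p$ in which a $3$-element subset is a basis unless it is of the form $\{x, x+\alpha^2, x+u\alpha^2\}$ for some $x \in \mathbb{Z}_p$ and $\alpha \in \mathbb{Z}_p^\times$.
   Context: $\mathbb{Z}_p$ acts on itself by translation; a matroid on $\mathbb{Z}_p$ is $\mathbb{Z}_p$-invariant if translates of bases are bases. A matroid is simple if every circuit has at least three elements. *)

(* Defs.v *)
From mathcomp Require Import all_boot all_algebra.
Set Implicit Arguments. Unset Strict Implicit. Unset Printing Implicit Defensive.
Import GRing.Theory.
Local Open Scope ring_scope.

Definition matroid_bases (T : finType) (B : {set {set T}}) : Prop :=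
  B != set0 /\
  forall B1 B2, B1 \in B -> B2 \in B -> forall x, x \in B1 :\: B2 ->
    exists2 y, y \in B2 :\: B1 & y |: (B1 :\ x) \in B.

Definition m_indep (T : finType) (B : {set {set T}}) (I : {set T}) : Prop :=
  exists2 b, b \in B & I \subset b.

Definition m_circuit (T : finType) (B : {set {set T}}) (C : {set T}) : Prop :=
  ~ m_indep B C /\ forall D : {set T}, D \proper C -> m_indep B D.

Definition m_simple (T : finType) (B : {set {set T}}) : Prop :=
  forall C, m_circuit B C -> (3 <= #|C|)%N.

Definition m_rank_eq (T : finType) (B : {set {set T}}) (r : nat) : Prop :=
  forall b, b \in B -> #|b| = r.

Definition Zp_invariant (p : nat) (B : {set {set 'F_p}}) : Prop :=
  forall b (x : 'F_p), b \in B -> [set y + x | y in b] \in B.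

(* Main.v *)
Require Import Defs.
From mathcomp Require Import all_boot all_algebra.
From mathcomp Require Import finfield ring zify.
Import GRing.Theory.
Local Open Scope ring_scope.

Lemma by_ideal (F : comPzRingType) (h e1 e2 k : F) :
  h = 0 -> e1 - e2 = k * h -> e1 = e2.
Proof. by move=> H0 E; apply/eqP; rewrite -subr_eq0 E H0 mulr0. Qed.
Arguments by_ideal {F h e1 e2 k}.

Lemma third_gen (R : fieldType) (u x a y z w : R) : u ^+ 2 - u + 1 = 0 -> u != 0 -> a != 0 ->
  (y == x) || (y == x + a ^+ 2) || (y == x + u * a ^+ 2) ->
  (z == x) || (z == x + a ^+ 2) || (z == x + u * a ^+ 2) ->
  (w == x) || (w == x + a ^+ 2) || (w == x + u * a ^+ 2) ->
  y != z -> w != y -> w != z ->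
  (exists2 b, b != 0 & z - y = b ^+ 2 /\ w = y + u * (z - y)) \/
  (exists2 b, b != 0 & y - z = b ^+ 2 /\ w = z + u * (y - z)).
Proof.
move=> hu0 un a0.
move=> /orP[/orP[]|] /eqP -> /orP[/orP[]|] /eqP -> /orP[/orP[]|] /eqP ->;
  rewrite ?eqxx // => _ _ _.
- left; exists a => //; split; ring.
- right; exists (u ^+ 2 * a); first by rewrite !mulf_neq0 // expf_neq0.
  split; [apply: (by_ideal (k := - u * (u + 1) * a ^+ 2) hu0) | apply: (by_ideal (k := a ^+ 2) hu0)]; ring.
- right; exists a => //; split; ring.
- left; exists (u * a); first by rewrite mulf_neq0.
  split; [apply: (by_ideal (k := - a ^+ 2) hu0) | apply: (by_ideal (k := - a ^+ 2) hu0)]; ring.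
- left; exists (u ^+ 2 * a); first by rewrite !mulf_neq0 // expf_neq0.
  split; [apply: (by_ideal (k := - u * (u + 1) * a ^+ 2) hu0) | apply: (by_ideal (k := a ^+ 2) hu0)]; ring.
- right; exists (u * a); first by rewrite mulf_neq0.
  split; [apply: (by_ideal (k := - a ^+ 2) hu0) | apply: (by_ideal (k := - a ^+ 2) hu0)]; ring.
Qed.

Section Main.
Variables (p : nat) (hp : prime p) (hmod : (p %% 12 = 7)%N)
  (u : 'F_p) (hu : 6.-primitive_root u).

Local Notation F := 'F_p.

Lemma p_ge7 : (7 <= p)%N.
Proof. have := divn_eq p 12; lia. Qed.

Lemma u_eq : u ^+ 2 - u + 1 = 0.
Proof.
have h6 := prim_expr_order hu.
have n3 : u ^+ 3 != 1 by rewrite -(prim_order_dvd hu).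
have n2 : u ^+ 2 != 1 by rewrite -(prim_order_dvd hu).
have : (u ^+ 3 - 1) * (u + 1) * (u ^+ 2 - u + 1) = 0.
  by apply: (by_ideal (h := u ^+ 6 - 1) (k := 1)); [rewrite h6 subrr | ring].
move/eqP; rewrite !mulf_eq0 => /orP[/orP[]|/eqP //].
  by rewrite subr_eq0 (negPf n3).
rewrite addr_eq0 => /eqP E; move: n2; by rewrite E sqrrN expr1n eqxx.
Qed.

Lemma u_neq0 : u != 0.
Proof.
apply/negP => /eqP E; have := u_eq; rewrite E expr0n /= subrr add0r.
by move/eqP; rewrite oner_eq0.
Qed.

Lemma two_neq0 : (2 : F) != 0.
Proof.
rewrite -(dvdn_pcharf (pchar_Fp hp)); apply/negP => /dvdn_leq.
by have := p_ge7; lia.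
Qed.

Lemma no_sqrt_m1 (b : F) : b ^+ 2 = -1 -> False.
Proof.
move=> hb.
have b0 : b != 0 by apply/negP => /eqP E; move: hb; rewrite E expr0n /= => /eqP;
  rewrite eq_sym oppr_eq0 oner_eq0.
have hpk : p = (4 * (p %/ 4) + 3)%N by have := divn_eq p 4; have := divn_eq p 12; lia.
have := expf_card b; rewrite card_Fp // => E0.
have : b ^+ (4 * (p %/ 4) + 3) = b by rewrite -hpk.
rewrite exprD exprM.
have -> : b ^+ 4 = 1 by rewrite (_ : 4 = 2 * 2)%N // exprM hb sqrrN expr1n.
rewrite expr1n mul1r.
rewrite (_ : 3 = 2 + 1)%N // exprD hb expr1 mulN1r => E.
idtac. have : b *+ 2 = 0 by rewrite mulr2n -{1}E addNr.
by move/eqP; rewrite -mulr_natl mulf_eq0 (negPf two_neq0) (negPf b0).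
Qed.

Definition dep (S : {set F}) : bool :=
  [exists x : F, [exists a : F, (a != 0) && (S == [set x; x + a ^+ 2; x + u * a ^+ 2])]].

Lemma depP S : reflect (exists (x a : F), a != 0 /\ S = [set x; x + a ^+ 2; x + u * a ^+ 2]) (dep S).
Proof.
apply: (iffP existsP) => [[x /existsP[a /andP[a0 /eqP E]]]|[x [a [a0 E]]]].
  by exists x, a.
by exists x; apply/existsP; exists a; rewrite a0 E eqxx.
Qed.

Lemma third (S : {set F}) y z w : dep S -> y \in S -> z \in S -> w \in S ->
  y != z -> w != y -> w != z ->
  (exists2 b, b != 0 & z - y = b ^+ 2 /\ w = y + u * (z - y)) \/
  (exists2 b, b != 0 & y - z = b ^+ 2 /\ w = z + u * (y - z)).
Proof.
move=> /depP[x [a [a0 ->]]]; rewrite !inE.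
move=> H1 H2 H3 H4 H5 H6; exact: (@third_gen _ u x a y z w u_eq u_neq0 a0 H1 H2 H3 H4 H5 H6).
Qed.

Lemma uniq_third a b c1 c2 : a != b -> c1 != a -> c1 != b -> c2 != a -> c2 != b ->
  dep [set c1; a; b] -> dep [set c2; a; b] -> c1 = c2.
Proof.
move=> ab c1a c1b c2a c2b d1 d2.
have T1 := @third _ a b c1 d1.
have T2 := @third _ a b c2 d2.
rewrite !inE !eqxx ?orbT in T1 T2.
have {T1} := T1 erefl erefl erefl ab c1a c1b.
have {T2} := T2 erefl erefl erefl ab c2a c2b.
have mix e f : e != 0 -> b - a = e ^+ 2 -> a - b = f ^+ 2 -> False.
  move=> e0 E1 E2; apply: (@no_sqrt_m1 (f / e)).
  rewrite expr_div_n -E1 -E2 -opprB mulNr divff // subr_eq0 eq_sym //.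
case=> [[e e0 [E1 ->]]|[e e0 [E1 ->]]] [[f f0 [E2 ->]]|[f f0 [E2 ->]]] //.
- by case: (mix _ _ e0 E1 E2).
- by case: (mix _ _ f0 E2 E1).
Qed.

Lemma exists_out (a b c : F) : exists d, d \notin [set a; b; c].
Proof.
have hc : (#|[set a; b; c]| <= 3)%N.
  apply: leq_trans (leq_card_setU _ _) _; rewrite cards1 addn1 ltnS.
  by apply: leq_trans (leq_card_setU _ _) _; rewrite !cards1.
case: (pickP (fun d => d \notin [set a; b; c])) => [d hd|H]; first by exists d.
have : [set a; b; c] = setT by apply/setP => x; rewrite in_setT; apply/negbFE; exact: H.
move=> E; move: hc p_ge7; rewrite E cardsT card_Fp //; lia.
Qed.

Definition Bs : {set {set F}} := [set S : {set F} | (#|S| == 3)%N && ~~ dep S].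

Lemma ext2 (a b : F) : exists2 S, S \in Bs & [set a; b] \subset S.
Proof.
wlog ab : b / a != b.
  move=> W; case: (eqVneq a b) => [<-|ab]; last exact: W.
  have /W [S SB sub] : a != a + 1.
    by rewrite -subr_eq0 opprD addrA subrr sub0r oppr_eq0 oner_eq0.
  exists S => //; apply: subset_trans sub; rewrite setUid sub1set !inE eqxx //.
have card3 c : c \notin [set a; b] -> #|[set c; a; b]| = 3%N.
  move=> cn; rewrite -setUA cardsU1 cards2 cn ab //.
have [c1 c1n] := exists_out a b a.
have c1n' : c1 \notin [set a; b] by move: c1n; rewrite !inE; apply: contra => /orP[] ->; rewrite ?orbT.
case D1: (dep [set c1; a; b]).
  have [c2 c2n] := exists_out a b c1.
  have c2n' : c2 \notin [set a; b] by move: c2n; rewrite !inE; apply: contra => /orP[] ->; rewrite ?orbT.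
  exists [set c2; a; b].
    rewrite inE card3 // eqxx /=; apply/negP => D2.
    move: c1n' c2n' c2n; rewrite !inE !negb_or => /andP[h1 h2] /andP[h3 h4].
    by rewrite (@uniq_third a b c1 c2 ab h1 h2 h3 h4 D1 D2) eqxx !andbF.
  by apply/subsetP => x; rewrite !inE => /orP[] ->; rewrite ?orbT.
exists [set c1; a; b]; first by rewrite inE card3 // D1.
by apply/subsetP => x; rewrite !inE => /orP[] ->; rewrite ?orbT.
Qed.

Lemma small_indep (I : {set F}) : (#|I| <= 2)%N -> m_indep Bs I.
Proof.
move=> hI.
have [a [b Iab]] : exists a b, I \subset [set a; b].
  move: hI; rewrite leq_eqVlt ltnS leq_eqVlt ltnS leqn0.
  case/orP=> [/cards2P[a [b [_ ->]]]|/orP[/cards1P[a ->]|/eqP/cards0_eq ->]].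
  - by exists a, b.
  - by exists a, a; rewrite sub1set !inE eqxx.
  - by exists 0, 0; rewrite sub0set.
have [S SB sub] := ext2 a b.
by exists S => //; apply: subset_trans sub.
Qed.

Lemma dep_tr S t : dep S -> dep [set y + t | y in S].
Proof.
move=> /depP[x [a [a0 ->]]]; apply/depP; exists (x + t), a; split => //.
by rewrite !imsetU !imset_set1 (addrAC x (a ^+ 2)) (addrAC x (u * a ^+ 2)).
Qed.

Lemma exchange : matroid_bases Bs.
Proof.
split.
  by have [S SB _] := ext2 0 0; apply/set0Pn; exists S.
move=> B1 B2 hB1 hB2 x hx.
have := hB1; rewrite inE => /andP[/eqP c1 d1].
have := hB2; rewrite inE => /andP[/eqP c2 d2].
have := hx; rewrite in_setD => /andP[xB2 xB1].
set R := B1 :\ x.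
have cR : #|R| = 2%N.
  by move: (cardsD1 x B1); rewrite xB1 c1 add1n => -[].
have RB1 z : z \in R -> z \in B1 by rewrite /R in_setD1 => /andP[].
have y3 y : y \notin B1 -> #|y |: R| = 3%N.
  move=> yn; rewrite cardsU1 cR (_ : y \notin R) //; apply: contra yn; exact: RB1.
have neq z w : z \notin B1 -> w \in B1 -> z != w.
  by move=> zn wi; apply/eqP => E; move: zn; rewrite E wi.
have [a [b [ab Rab]]] := cards2P _ (introT eqP cR).
have aB1 : a \in B1 by apply: RB1; rewrite Rab !inE eqxx.
have bB1 : b \in B1 by apply: RB1; rewrite Rab !inE eqxx orbT.
have [y0 y0D] : exists y0, y0 \in B2 :\: B1.
  apply/set0Pn; apply/negP => /eqP E.
  have : B2 \subset R.
    apply/subsetP => z zB2; rewrite /R in_setD1.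
    have -> : z \in B1 by move/eqP: E; rewrite setD_eq0 => /subsetP; apply.
    rewrite andbT; apply/eqP => zx; move: xB2; by rewrite -zx zB2.
  by move/subset_leq_card; rewrite c2 cR.
case: (boolP [exists y, (y \in B2 :\: B1) && (y |: R \in Bs)]).
  by move/existsP => [y /andP[yD yB]]; exists y.
rewrite negb_exists => /forallP H; exfalso.
have depy y : y \in B2 :\: B1 -> dep (y |: R).
  move=> yD; have yn : y \notin B1 by move: yD; rewrite in_setD => /andP[].
  have := H y; rewrite yD /= /Bs in_set y3 // eqxx /= negbK; exact: id.
have uniqD y : y \in B2 :\: B1 -> y = y0.
  move=> yD; have yn : y \notin B1 by move: yD; rewrite in_setD => /andP[].
  have y0n : y0 \notin B1 by move: y0D; rewrite in_setD => /andP[].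
  have := depy y yD; have := depy y0 y0D; rewrite Rab !setUA => D0 D.
  exact: (@uniq_third a b y y0 ab (neq _ _ yn aB1) (neq _ _ yn bB1)
           (neq _ _ y0n aB1) (neq _ _ y0n bB1) D D0).
have sub : B2 \subset y0 |: R.
  apply/subsetP => z zB2; rewrite in_setU1 /R in_setD1.
  case zB1: (z \in B1).
    have zx : z != x by apply/eqP => E; move: xB2; rewrite -E zB2.
    by rewrite zx orbT.
  by rewrite (uniqD z) ?eqxx // in_setD zB1 zB2.
have y0n : y0 \notin B1 by move: y0D; rewrite in_setD => /andP[].
have E : B2 = y0 |: R by apply/eqP; rewrite eqEcard sub (y3 y0) // c2.
by move: (H y0); rewrite y0D -E /Bs in_set c2 eqxx d2.
Qed.

End Main.

Theorem proposition3p13 (p : nat) (hp : prime p) (hmod : (p %% 12 = 7)%N)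
  (u : 'F_p) (hu : 6.-primitive_root u) :
  exists B : {set {set 'F_p}},
    [/\ matroid_bases B, m_rank_eq B 3, m_simple B, Zp_invariant B &
      forall S : {set 'F_p}, #|S| = 3%N ->
        (S \in B <->
         ~ exists (x a : 'F_p), a != 0 /\ S = [set x; x + a ^+ 2; x + u * a ^+ 2])].
Proof.
exists (Bs p u); split.
- exact: exchange.
- by move=> b; rewrite inE => /andP[/eqP].
- move=> C [nind _]; rewrite leqNgt; apply/negP => hC; apply: nind.
  exact: small_indep.
- move=> b t; rewrite !inE => /andP[/eqP cb db].
  rewrite card_imset ?cb; last exact: addIr.
  rewrite eqxx /=; apply: contra db => D.
  have := @dep_tr p u _ (-t) D.
  have -> // : [set z + -t | z in [set y + t | y in b]] = b.
  apply/setP => z; apply/imsetP/idP => [[w /imsetP[v vb ->] ->]|zb].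
    by rewrite addrK.
  by exists (z + t); [apply/imsetP; exists z | rewrite addrK].
- move=> S hS; rewrite inE hS eqxx /=; split.
    move=> nd [x [a [a0 E]]]; move/negP: nd; apply; apply/depP; by exists x, a.
  move=> H; apply/negP => /depP [x [a [a0 E]]]; apply: H; by exists x, a.
Qed.
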